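(* Let $r\ge1$ and let $\gamma_1,\dots,\gamma_{r+1},p_1,\dots,p_{r+1},a_1,\dots,a_{r+1}$ be indeterminates. Let $\mathrm{Wr}$ denote the relations (coefficientwise in $z=e^{\zeta}$) $$\frac{\det_{1\le i,j\le r+1}\big[z(1+\gamma_i)^{j-1}-p_i\gamma_i^{j-1}\big]}{\det_{1\le i,j\le r+1}\big[(1+\gamma_i)^{j-1}\big]}=\Lambda(z)=\prod_{i=1}^{r+1}(z-a_i),$$ and set ${\rm Fun}(t{\rm Op}_Z^{\Lambda})=\mathbb{C}(\gamma_i,p_i,a_i)/\mathrm{Wr}$. Let $t=(t_{ij})_{i,j=1}^{r+1}$ be the rational Ruijsenaars–Schneider Lax matrix $$t_{ij}=\frac{\prod_{m\neq j}(\gamma_i-\gamma_m-1)}{\prod_{l\neq j}(\gamma_j-\gamma_l)}\,p_i,$$ and define the rRS Hamiltonians by $\det(z-t)=\sum_k H^{rRS}_k(\{\gamma_i\},\{p_i\})z^k$. Then there is an isomorphism of algebras $${\rm Fun}(t{\rm Op}_Z^{\Lambda})\cong\mathbb{C}(\gamma_i,p_i,a_i)\Big/\Big(\text{relations }\det(z-t)=\prod_{i=1}^{r+1}(z-a_i)\text{ coefficientwise in }z\Big).$$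
   Context: ${\rm Fun}(t{\rm Op}_Z^{\Lambda})$ is the algebra of functions on the space of canonical trigonometrically $Z$-twisted Miura $SL(r+1)$-opers on $\mathbb{P}^1$, $Z=\mathrm{diag}(\gamma_1,\dots,\gamma_{r+1})$ regular semisimple: the oper connection is gauge equivalent to $\partial_z+Z/z$ (equivalently, in the cylinder coordinate $z=e^{\zeta}$, to $\partial_\zeta+Z$), the section of the line subbundle has degree-one monic components, the only regular singularities are the distinct roots $a_i$ of $\Lambda$, and the twisted Wronskian condition takes the form $\mathrm{Wr}$ above. *)

(* Defs.v *)
From HB Require Import structures.
From mathcomp Require Import all_boot all_order all_algebra.
From mathcomp Require Import complex.
From mathcomp Require Import reals.
Set Implicit Arguments. Unset Strict Implicit. Unset Printing Implicit Defensive.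
Import Order.TTheory GRing.Theory Num.Theory.
Local Open Scope ring_scope.

Section RRS.
Variables (B : comUnitRingType) (n : nat).
Implicit Types (g p a : 'I_n -> B).

(* numerator matrix of the twisted Wronskian: z (1+g_i)^(j-1) - p_i g_i^(j-1),
   j ranges over 'I_n starting at 0 so j here is j-1 of the paper *)
Definition Wr_mat g p : 'M[{poly B}]_n :=
  \matrix_(i, j) ('X * ((1 + g i) ^+ j)%:P - (p i * g i ^+ j)%:P).

Definition Vdm_mat g : 'M[B]_n := \matrix_(i, j) ((1 + g i) ^+ j).

Definition Lambda a : {poly B} := \prod_(i < n) ('X - (a i)%:P).

Definition Wr_rel g p a : Prop :=
  (\det (Vdm_mat g))^-1 *: \det (Wr_mat g p) = Lambda a.

Definition rRS_Lax g p : 'M[B]_n :=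
  \matrix_(i, j) ((\prod_(m < n | m != j) (g i - g m - 1))
                  / (\prod_(l < n | l != j) (g j - g l)) * p i).

Definition rRS_rel g p a : Prop := char_poly (rRS_Lax g p) = Lambda a.

End RRS.

(* Main.v *)
Require Import Defs.
From HB Require Import structures.
From mathcomp Require Import all_boot all_order all_algebra.
From mathcomp Require Import complex.
From mathcomp Require Import reals.
Import Order.TTheory GRing.Theory Num.Theory.
Local Open Scope ring_scope.
Local Open Scope complex_scope.

Section Interp.
Variables (B : comUnitRingType) (n : nat) (x : 'I_n -> B).
Hypothesis hx : forall i j, i != j -> x i - x j \is a GRing.unit.

Definition den j := \prod_(m < n | m != j) (x j - x m).
Definition Lp j : {poly B} := (den j)^-1 *: \prod_(m < n | m != j) ('X - (x m)%:P).

Lemma den_unit j : den j \is a GRing.unit.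
Proof. by apply: unitr_prod => m; rewrite eq_sym; apply: hx. Qed.

Lemma Lp_eval j y : (Lp j).[y] = (\prod_(m < n | m != j) (y - x m)) / den j.
Proof.
rewrite /Lp hornerZ horner_prod mulrC; congr (_ * _).
by apply: eq_bigr => m _; rewrite hornerXsubC.
Qed.

Lemma Lp_size j : (size (Lp j) <= n)%N.
Proof.
apply: leq_trans (size_scale_leq _ _) _.
rewrite -big_filter size_prod_XsubC size_filter.
have := cardC1 j; rewrite card_ord cardE /enum_mem size_filter.
rewrite [index_enum _]unlock => H.
rewrite (@eq_count _ _ (mem (predC1 j))) // H.
by case: n j {H} => [[]|].
Qed.

Lemma Lp_at j l : (Lp j).[x l] = (j == l)%:R.
Proof.
rewrite Lp_eval; case: eqP => [->|/eqP ne].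
  by rewrite divrr // den_unit.
by rewrite (bigD1 l) 1?eq_sym //= subrr mul0r mul0r.
Qed.

Lemma uniq_roots_map (s : seq 'I_n) : uniq s -> uniq_roots (map x s).
Proof.
elim: s => //= i s IH /andP[ni us]; rewrite IH // andbT.
apply/allP => _ /mapP[j js ->]; rewrite /diff_roots mulrC eqxx /=.
by apply: hx; apply: contraNneq ni => <-.
Qed.

Lemma interp k (hk : (k < n)%N) y :
  \sum_j (Lp j).[y] * x j ^+ k = y ^+ k.
Proof.
pose D := 'X^k - \sum_j (x j ^+ k) *: Lp j.
suff D0 : D = 0.
  have := congr1 (fun q => q.[y]) D0.
  rewrite /D hornerD hornerN horner_sum hornerXn horner0 => /eqP.
  rewrite subr_eq0 => /eqP ->; apply: eq_bigr => j _.
  by rewrite -mul_polyC hornerM hornerC mulrC.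
have [//|nzD] := eqVneq D 0; exfalso.
have := max_ring_poly_roots nzD _ (@uniq_roots_map (enum 'I_n) (enum_uniq 'I_n)).
rewrite size_map size_enum_ord.
have szD : (size D <= n)%N.
  apply: leq_trans (size_polyD _ _) _; rewrite geq_max size_polyXn hk /=.
  rewrite size_polyN; apply: (leq_trans (size_sum _ _ _)).
  apply/bigmax_leqP => j _; apply: leq_trans (size_scale_leq _ _) _.
  exact: Lp_size.
move=> H; suff Hr : all (root D) [seq x i | i <- enum 'I_n] by have := leq_trans (H Hr) szD; rewrite ltnn.
apply/allP => _ /mapP[l _ ->]; rewrite /root /D hornerD hornerN horner_sum hornerXn.
rewrite (bigD1 l) //= big1 => [|j /negbTE nl]; last by rewrite hornerZ Lp_at nl mulr0.
by rewrite hornerZ Lp_at eqxx mulr1 addr0 subrr.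
Qed.
End Interp.

Lemma tV (B : comUnitRingType) (n : nat) (g p : 'I_n -> B) :
  (forall i j : 'I_n, i != j -> g i - g j \is a GRing.unit) ->
  rRS_Lax g p *m Vdm_mat g = \matrix_(i, k) (p i * g i ^+ k).
Proof.
move=> hg; pose x := fun j => 1 + g j.
have hx : forall i j, i != j -> x i - x j \is a GRing.unit.
  by move=> i j ij; rewrite /x opprD addrACA subrr add0r; apply: hg.
apply/matrixP => i k; rewrite !mxE.
rewrite -[RHS](congr1 (fun v => p i * v) (@interp _ _ x hx k (ltn_ord k) (g i))).
rewrite mulr_sumr; apply: eq_bigr => j _; rewrite !mxE Lp_eval.
rewrite /den /x; set a := \prod_(_ < _ | _) _; set b := \prod_(_ < _ | _) _.
set a' := \prod_(_ < _ | _) _; set b' := \prod_(_ < _ | _) _.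
have -> : a' = a by apply: eq_bigr => m _; rewrite opprD addrA addrAC.
have -> : b' = b by apply: eq_bigr => m _; rewrite opprD addrACA subrr add0r.
by rewrite -mulrA mulrCA.
Qed.

Lemma Wr_eq (B : comUnitRingType) (n : nat) (g p : 'I_n -> B) :
  (forall i j : 'I_n, i != j -> g i - g j \is a GRing.unit) ->
  Wr_mat g p = char_poly_mx (rRS_Lax g p) *m map_mx polyC (Vdm_mat g).
Proof.
move=> hg; rewrite /char_poly_mx mulmxBl mul_scalar_mx -map_mxM (@tV _ _ g p hg).
apply/matrixP => i k; rewrite !mxE.
by [].
Qed.


Theorem mainTheorem6 (R : realType) (r : nat) (hr : (1 <= r)%N)
    (B : comUnitAlgType R[i]) (g p a : 'I_r.+1 -> B) :
  (forall i j : 'I_r.+1, i != j -> g i - g j \is a GRing.unit) ->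
  (Wr_rel g p a <-> rRS_rel g p a).
Proof.
move=> hg.
have dU : \det (Vdm_mat g) \is a GRing.unit.
  have -> : Vdm_mat g = (Vandermonde r.+1 (\row_j (1 + g j) : 'rV[B]_r.+1))^T.
    by apply/matrixP => i j; rewrite /Vandermonde /Vdm_mat !mxE.
  rewrite det_tr det_Vandermonde; apply: unitr_prod => i _.
  apply: unitr_prod => j ij; rewrite !mxE opprD addrACA subrr add0r.
  by apply: hg; rewrite neq_ltn ij orbT.
have E : (\det (Vdm_mat g))^-1 *: \det (Wr_mat g p) = char_poly (rRS_Lax g p).
  rewrite (@Wr_eq _ _ g p hg) det_mulmx det_map_mx /= -/(char_poly _) mulrC mul_polyC.
  by rewrite scalerA mulVr // scale1r.
by rewrite /Wr_rel /rRS_rel E.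
Qed.
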